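(* Let $G$ be a $(\Delta+1)$-graph and let $H$ be a graph such that $\Delta(G)+1\ge |V(H)|-1-\Delta(H)$. Then $\chi_i(G\,\square\,H)\le \Delta(G\,\square\,H)+2$.
   Context: All graphs are finite and simple. An incidence of a graph $G$ is a pair $(v,e)$ with $v\in V(G)$, $e\in E(G)$ and $v\in e$. Two incidences $(v,e)$ and $(u,f)$ are adjacent if $v=u$, or $e=f$, or $vu\in\{e,f\}$. An incidence coloring of $G$ assigns colors to all incidences so that adjacent incidences receive distinct colors. $\chi_i(G)$ is the least number of colors in an incidence coloring of $G$. $\Delta(G)$ denotes the maximum degree. For a positive integer $k$, $G$ is a $(\Delta+k)$-graph if it admits an incidence coloring with at most $\Delta(G)+k$ colors. $G\,\square\,H$ denotes the Cartesian product: vertex set $V(G)\times V(H)$, with $(u,v)\sim(u',v')$ iff ($uu'\in E(G)$ and $v=v'$) or ($u=u'$ and $vv'\in E(H)$). *)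

(* Defs.v *)
From mathcomp Require Import all_boot.
Set Implicit Arguments. Unset Strict Implicit. Unset Printing Implicit Defensive.

(* A finite simple graph is a vertex finType V with an adjacency relation
   e : rel V that is symmetric and irreflexive (these are hypotheses of the
   theorem).  An incidence is a pair (v, w) with e v w, representing the
   incidence (v, vw). *)

Section Incidence.
Variables (V : finType) (e : rel V).

(* Adjacency of incidences (v,vw) and (u,ux):  v = u, or vw = ux, or
   vu in {vw, ux}.  For incidences, vw = ux means (v,w)=(u,x) or
   (v,w)=(x,u); vu = vw means u = w; vu = ux means x = v. *)
Definition inc_adj (p q : V * V) : bool :=
  [|| p.1 == q.1, (p.1 == q.2) && (p.2 == q.1), p.2 == q.1 | q.2 == p.1].

(* c is an incidence coloring with (at most) k colors {0,...,k-1}: every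
   incidence gets a color < k, and distinct adjacent incidences get distinct
   colors.  (Values of c at non-incidences are irrelevant; the codomain
   'I_k.+1 is only a finite carrier.) *)
Definition is_inc_coloring (k : nat) (c : {ffun V * V -> 'I_k.+1}) : bool :=
  [forall p : V * V, e p.1 p.2 ==> (c p < k)] &&
  [forall p : V * V, forall q : V * V,
     [&& e p.1 p.2, e q.1 q.2, p != q & inc_adj p q] ==> (c p != c q)].

Definition inc_colorable (k : nat) : bool :=
  [exists c : {ffun V * V -> 'I_k.+1}, is_inc_coloring c].

Lemma inc_colorable_exists : exists k, inc_colorable k.
Proof.
exists #|{: V * V}|; apply/existsP.
have lt (p : V * V) : enum_rank p < #|{: V * V}|.+1.
  by apply: ltnW; apply: ltn_ord.
exists [ffun p => inord (enum_rank p)].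
apply/andP; split.
  by apply/forallP => p; apply/implyP => _; rewrite ffunE inordK.
apply/forallP => p; apply/forallP => q; apply/implyP => /and4P [_ _ npq _].
rewrite !ffunE; apply: contra npq => /eqP /(congr1 val).
rewrite /= (inordK (lt p)) (inordK (lt q)) => /val_inj /enum_rank_inj ->.
by rewrite eqxx.
Qed.

Definition chi_i : nat := ex_minn inc_colorable_exists.

Definition deg (v : V) : nat := #|[set w | e v w]|.
Definition Delta : nat := \max_(v : V) deg v.

End Incidence.

Definition Delta_plus_graph (V : finType) (e : rel V) (k : nat) : bool :=
  inc_colorable e (Delta e + k).

Definition cartprod (V1 V2 : finType) (e1 : rel V1) (e2 : rel V2)
  : rel (V1 * V2) :=
  fun a b => (e1 a.1 b.1 && (a.2 == b.2)) || ((a.1 == b.1) && e2 a.2 b.2).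

(* Main.v *)
Require Import Defs.
From mathcomp Require Import all_boot.
From mathcomp Require Import zify.
Set Implicit Arguments. Unset Strict Implicit. Unset Printing Implicit Defensive.

Lemma adj_crit (T : finType) (e : rel T) (col : T * T -> nat) :
  (forall u w w', e u w -> e u w' -> w != w' -> col (u,w) != col (u,w')) ->
  (forall u w x, e u w -> e w x -> col (u,w) != col (w,x)) ->
  forall p q, e p.1 p.2 -> e q.1 q.2 -> p != q -> inc_adj p q -> col p != col q.
Proof.
move=> hA hB [u w] [u' w'] /= euw eu'w' npq.
rewrite /inc_adj /=.
case/or4P.
- move/eqP=> eu; subst u'. apply: hA => //. by apply: contra npq => /eqP ->.
- case/andP => /eqP e1 /eqP e2; subst u' w'. exact: hB.
- move/eqP => ew; subst u'. exact: hB.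
- move/eqP => ew; subst w'. rewrite eq_sym. exact: hB.
Qed.

Lemma cart_edge (V1 V2 : finType) (e1 : rel V1) (e2 : rel V2) v y w z :
  cartprod e1 e2 (v,y) (w,z) -> (e1 v w /\ y = z) \/ (v = w /\ e2 y z).
Proof.
rewrite /cartprod /= => /orP [/andP [h /eqP ->]|/andP [/eqP -> h]]; by [left|right].
Qed.

Lemma deg_cart (V1 V2 : finType) (e1 : rel V1) (e2 : rel V2)
  (irr1 : irreflexive e1) v y :
  deg e1 v + deg e2 y <= deg (cartprod e1 e2) (v,y).
Proof.
rewrite /deg.
set A := [set (w, y) | w in [set w | e1 v w]].
set B := [set (v, z) | z in [set z | e2 y z]].
have cA : #|A| = #|[set w | e1 v w]|.
  by apply: card_imset => a b [].
have cB : #|B| = #|[set z | e2 y z]|.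
  by apply: card_imset => a b [].
have I0 : A :&: B = set0.
  apply/eqP; rewrite -subset0; apply/subsetP => b.
  rewrite inE => /andP [/imsetP [w Hw ->] /imsetP [z Hz [E1 E2]]].
  by move: Hw; rewrite inE E1 irr1.
have sub : A :|: B \subset [set b | cartprod e1 e2 (v,y) b].
  apply/subsetP => b; rewrite !inE => /orP [/imsetP [w Hw ->]|/imsetP [z Hz ->]].
    by rewrite inE in Hw; rewrite /cartprod /= Hw eqxx.
  by rewrite inE in Hz; rewrite /cartprod /= Hz eqxx orbT.
rewrite -cA -cB.
apply: leq_trans (subset_leq_card sub).
by rewrite cardsU I0 cards0 subn0.
Qed.

Lemma Delta_cart (V1 V2 : finType) (e1 : rel V1) (e2 : rel V2)
  (irr1 : irreflexive e1) (v : V1) (y : V2) :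
  Delta e1 + Delta e2 <= Delta (cartprod e1 e2).
Proof.
rewrite /Delta.
have h1 : 0 < #|V1| by apply/card_gt0P; exists v.
have h2 : 0 < #|V2| by apply/card_gt0P; exists y.
have [v0 ->] := @eq_bigmax _ (deg e1) h1.
have [y0 ->] := @eq_bigmax _ (deg e2) h2.
apply: leq_trans (deg_cart e2 irr1 v0 y0) _.
exact: (@leq_bigmax _ (deg (cartprod e1 e2)) (v0, y0)).
Qed.

Theorem mainTheorem3 (V1 V2 : finType) (e1 : rel V1) (e2 : rel V2)
  (sym1 : symmetric e1) (irr1 : irreflexive e1)
  (sym2 : symmetric e2) (irr2 : irreflexive e2) :
  Delta_plus_graph e1 1 ->
  #|V2| - 1 - Delta e2 <= Delta e1 + 1 ->
  chi_i (cartprod e1 e2) <= Delta (cartprod e1 e2) + 2.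
Proof.
move=> /existsP [c /andP [/forallP cb /forallP cd]] hV.
have cb' : forall v w, e1 v w -> c (v, w) < (Delta e1).+1.
  by move=> v w h; have := cb (v, w); rewrite /= h -(addn1 (Delta e1)).
have cd' : forall p q, e1 p.1 p.2 -> e1 q.1 q.2 -> p != q -> inc_adj p q ->
    c p != c q.
  move=> p q h1 h2 h3 h4; have /forallP /(_ q) := cd p.
  by rewrite h1 h2 h3 h4.
pose k := (Delta e1 + Delta e2).+2.
have hVk : #|V2| <= k by rewrite /k; lia.
pose phi (y : V2) : 'I_k := widen_ord hVk (enum_rank y).
have phi_inj : injective phi.
  by move=> y z /(congr1 val) /= /val_inj /enum_rank_inj.
pose NB (y : V2) : {set V2} := y |: [set z | e2 y z].
pose F (y : V2) : {set 'I_k} := phi @: NB y.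
pose A (y : V2) : {set 'I_k} := ~: F y.
have cardA y : (Delta e1).+1 <= size (enum (A y)).
  rewrite -cardE.
  have h1 : #|F y| <= #|NB y| := leq_imset_card _ _.
  have h2 : #|NB y| <= (deg e2 y).+1.
    by rewrite cardsU1 /deg; case: (y \notin _).
  have h3 : deg e2 y <= Delta e2 := @leq_bigmax _ (deg e2) y.
  have h4 := cardsC (F y); rewrite card_ord in h4.
  rewrite /A; lia.
pose pi (y : V2) (i : nat) : nat := val (nth ord0 (enum (A y)) i).
have pi_lt y i : pi y i < k by apply: ltn_ord.
have pi_inj y i j : i < (Delta e1).+1 -> j < (Delta e1).+1 ->
    i != j -> pi y i != pi y j.
  move=> hi hj nij; rewrite /pi.
  apply: contra nij => /eqP /val_inj /eqP.
  rewrite nth_uniq ?enum_uniq //; exact: leq_trans (cardA y).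
have piF y i z : i < (Delta e1).+1 -> (z == y) || e2 y z ->
    pi y i != val (phi z).
  move=> hi hz; apply/negP => /eqP /val_inj E.
  have : nth ord0 (enum (A y)) i \in enum (A y).
    by apply: mem_nth; exact: leq_trans (cardA y).
  rewrite mem_enum E /A inE /F; apply/negP/negPn.
  apply: imset_f; rewrite /NB !inE; case/orP: hz => [->|->] //; by rewrite orbT.
pose col (p : (V1 * V2) * (V1 * V2)) : nat :=
  if p.1.2 == p.2.2 then pi p.1.2 (c (p.1.1, p.2.1)) else val (phi p.2.2).
have hne2 y z : e2 y z -> (y == z) = false.
  by move=> h; apply/eqP => E; subst; rewrite irr2 in h.
have hne1 v w : e1 v w -> (v == w) = false.
  by move=> h; apply/eqP => E; subst; rewrite irr1 in h.
have hA : forall u w w', cartprod e1 e2 u w -> cartprod e1 e2 u w' -> w != w' ->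
    col (u, w) != col (u, w').
  move=> [v y] [w1 z1] [w2 z2] /cart_edge h1 /cart_edge h2 nw.
  rewrite /col /=.
  case: h1 => [[h1 E1]|[E1 h1]]; case: h2 => [[h2 E2]|[E2 h2]]; subst.
  - rewrite eqxx; apply: pi_inj; try exact: cb'.
    apply: cd' => //=; last by rewrite /inc_adj /= eqxx.
    by apply: contra nw => /eqP [->].
  - by rewrite eqxx hne2 //; apply: piF => //; [exact: cb' | rewrite h2 orbT].
  - by rewrite eqxx hne2 // eq_sym; apply: piF => //; [exact: cb' | rewrite h1 orbT].
  - rewrite !hne2 //; apply: contra nw => /eqP /val_inj E; by rewrite (enum_rank_inj E).
have hB : forall u w x, cartprod e1 e2 u w -> cartprod e1 e2 w x ->
    col (u, w) != col (w, x).
  move=> [v y] [w1 z1] [x1 z2] /cart_edge h1 /cart_edge h2.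
  rewrite /col /=.
  case: h1 => [[h1 E1]|[E1 h1]]; case: h2 => [[h2 E2]|[E2 h2]]; subst.
  - rewrite eqxx; apply: pi_inj; try exact: cb'.
    apply: cd' => //=; last by rewrite /inc_adj /= eqxx !orbT.
    by apply/eqP => -[E _]; subst; rewrite irr1 in h1.
  - by rewrite eqxx hne2 //; apply: piF => //; [exact: cb' | rewrite h2 orbT].
  - by rewrite eqxx hne2 // eq_sym; apply: piF => //; [exact: cb' | rewrite eqxx].
  - rewrite !hne2 //; apply/negP => /eqP /val_inj /enum_rank_inj E; subst.
    by rewrite irr2 in h2.
pose K := Delta (cartprod e1 e2) + 2.
have col_lt p : cartprod e1 e2 p.1 p.2 -> col p < K.
  case: p => [[v y] b] /= _.
  apply: (@leq_trans k).
    rewrite /col; case: ifP => _; [exact: pi_lt | exact: ltn_ord].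
  have := Delta_cart e2 irr1 v y; rewrite /K /k; lia.
have col_K : inc_colorable (cartprod e1 e2) K.
  apply/existsP; exists [ffun p => inord (col p) : 'I_K.+1].
  apply/andP; split.
    apply/forallP => p; apply/implyP => hp.
    by rewrite ffunE inordK ?col_lt // ltnS ltnW // col_lt.
  apply/forallP => p; apply/forallP => q; apply/implyP => /and4P [hp hq npq hpq].
  rewrite !ffunE; apply: contra (adj_crit hA hB hp hq npq hpq).
  have lp : col p < K.+1 by apply: ltnW; rewrite ltnS; apply: col_lt.
  have lq : col q < K.+1 by apply: ltnW; rewrite ltnS; apply: col_lt.
  move=> /eqP /(congr1 (@nat_of_ord _)).
  rewrite (inordK lp) (inordK lq) => ->.
  exact: eqxx.
rewrite /chi_i; case: ex_minnP => m _ hmin; exact: hmin.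
Qed.
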